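(* Let $(X,\tau,\mathcal{I})$ be an ideal topological space such that $(X,\tau)$ is semi-Alexandroff, $(X,\tau,\mathcal{I})$ is a $T_{\mathcal{I}}$-space, and $\mathcal{I}$ is a $\tau$-boundary. Then $\mathcal{I}$ is completely codense.
   Context: An ideal on a topological space $(X,\tau)$ is a nonempty collection $\mathcal{I}$ of subsets of $X$ closed under taking subsets and finite unions; $(X,\tau,\mathcal{I})$ is then called an ideal topological space. $(X,\tau,\mathcal{I})$ is a $T_{\mathcal{I}}$-space if for every $I\in\mathcal{I}$ and every $x\in X\setminus I$ there is a set $A_x\subseteq X$ with $x\in A_x$, $A_x\cap I=\emptyset$, and $A_x$ either open or closed. A set is semi-open if it lies between an open set and the closure of that open set. $(X,\tau)$ is semi-Alexandroff if every intersection of open sets is semi-open. $\mathcal{I}$ is a $\tau$-boundary if $\tau\cap\mathcal{I}=\{\emptyset\}$. A set $A$ is preopen if $A\subseteq \mathrm{Int}\,\overline{A}$; $\mathcal{I}$ is completely codense if the only preopen set belonging to $\mathcal{I}$ is $\emptyset$ (equivalently, every member of $\mathcal{I}$ is nowhere dense). *)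

(* Defs.v *)
From HB Require Import structures.
From mathcomp Require Import all_boot all_order.
From mathcomp Require Import all_classical all_reals all_analysis.
Set Implicit Arguments. Unset Strict Implicit. Unset Printing Implicit Defensive.
Local Open Scope classical_set_scope.

Definition is_ideal (X : Type) (Id : set (set X)) : Prop :=
  (exists A, Id A) /\
  (forall A B, Id B -> A `<=` B -> Id A) /\
  (forall A B, Id A -> Id B -> Id (A `|` B)).

Definition semi_open (X : topologicalType) (A : set X) : Prop :=
  exists U : set X, open U /\ U `<=` A /\ A `<=` closure U.

Definition semi_Alexandroff (X : topologicalType) : Prop :=
  forall F : set (set X), (forall U, F U -> open U) ->
    semi_open (\bigcap_(U in F) U).

Definition T_I_space (X : topologicalType) (Id : set (set X)) : Prop :=
  forall I, Id I -> forall x : X, ~ I x ->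
    exists A : set X, A x /\ A `&` I = set0 /\ (open A \/ closed A).

Definition tau_boundary (X : topologicalType) (Id : set (set X)) : Prop :=
  forall U : set X, open U -> Id U -> U = set0.

Definition preopen (X : topologicalType) (A : set X) : Prop :=
  A `<=` interior (closure A).

Definition completely_codense (X : topologicalType) (Id : set (set X)) : Prop :=
  forall A : set X, preopen A -> Id A -> A = set0.

(* Main.v *)
Require Import Defs.
From mathcomp Require Import all_boot all_order.
From mathcomp Require Import all_classical all_reals all_analysis.
Local Open Scope classical_set_scope.

Theorem mainTheorem1 (X : topologicalType) (Id : set (set X)) :
  is_ideal Id -> semi_Alexandroff X -> T_I_space Id -> tau_boundary Id ->
  completely_codense Id.
Proof.
move=> [_ [Hsub _]] HSA HT Hb A HpA HA.
pose F := [set U : set X | open U /\ A `<=` U].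
have [V [oV [VK KV]]] := HSA F (fun U FU => FU.1).
set K := \bigcap_(U in F) U in VK KV.
have AK : A `<=` K by move=> x Ax U [_ AU]; exact: AU.
have KclA : forall x, K x -> closure A x -> A x.
  move=> x Kx clx; apply: contrapT => nAx.
  have [B [Bx [BA [oB|cB]]]] := HT A HA x nAx.
    have := clx B (open_nbhs_nbhs (conj oB Bx)).
    by move=> [y [Ay By]]; have : (A `&` B) y by []; rewrite setIC BA.
  have : (~` B) x.
    apply: Kx; split; first exact: closed_openC.
    move=> y Ay By; have : (B `&` A) y by []; by rewrite BA.
  by [].
have VA : V `<=` A.
  move=> x Vx; apply: KclA; first exact: VK.
  have : K `<=` interior (closure A).
    move=> y Ky; apply: Ky; split; [exact: open_interior | exact: HpA].
  by move=> /(_ x (VK x Vx)) /interior_subset.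
have V0 : V = set0 := Hb V oV (Hsub _ _ HA VA).
apply/seteqP; split=> [x Ax|x []].
have := KV x (AK x Ax); by rewrite V0 closure0.
Qed.
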